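(* Let $\gamma\to_d\gamma'$ be a d-step. Then: (i) if the step is smooth, then $NS_\gamma(k)=NS_{\gamma'}(k)$ for every integer $k$; (ii) if the step is non-smooth, then with $k^*=\min\{\mathrm{rank}_\gamma(p,q) : (p,q)\in\mathrm{Edges},\ (p,q)\text{ non-smooth in }\gamma,\ \gamma'.p.d\ne\gamma.p.d \text{ or } \gamma'.q.d\neq\gamma.q.d\}$, we have (a) $NS_\gamma(k)=NS_{\gamma'}(k)$ for every integer $k<k^*$, and (b) $NS_{\gamma'}(k^* )\subsetneq NS_\gamma(k^* )$.
   Context: Let $G$ be a finite, connected, undirected graph with node set $V$ and a distinguished node $r$ (the root); $\mathrm{Edges}=\{(p,q)\in V\times V : p,q\text{ adjacent}\}$ (both orientations). Each node $p$ has a fixed ordered list $N(p)$ of its neighbours. A configuration $\gamma$ assigns to each node $p$ a value $\gamma.p.d\in\mathbb N$ and a neighbour $\gamma.p.par\in N(p)$. For a non-root $p$ let $Dist_p(\gamma)=\min\{\gamma.q.d+1 : q\in N(p)\}$. Algorithm BFS: Root enabled iff $\gamma.r.d\neq 0$, executing sets $r.d:=0$. Non-root $p$, action CD: enabled iff $\gamma.p.d\ne Dist_p(\gamma)$, executing sets $p.d:=Dist_p(\gamma)$. Non-root $p$, action CP: enabled iff $\gamma.p.d=Dist_p(\gamma)$ and $\gamma.q_0.d+1\neq\gamma.p.d$ with $q_0=\gamma.p.par$; executing sets $p.par$ to the first $q\in N(p)$ with $\gamma.q.d+1=\gamma.p.d$. A step $\gamma\to\gamma'$ holds iff a nonempty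 set $S$ of enabled nodes simultaneously execute their enabled action (evaluated in $\gamma$), others unchanged. A d-step $\gamma\to_d\gamma'$ is a step with $\gamma.r.d=\gamma'.r.d$ and $\gamma.p.d\neq\gamma'.p.d$ for some $p$. An edge $(p,q)$ is smooth in $\gamma$ if $|\gamma.p.d-\gamma.q.d|\le 1$, non-smooth otherwise. A d-step $\gamma\to_d\gamma'$ is smooth if every node $p$ with $\gamma'.p.d\neq\gamma.p.d$ has all its edges $(p,q)$, $q\in N(p)$, smooth in $\gamma$; otherwise it is non-smooth. $\mathrm{rank}_\gamma(p,q)=\min(\gamma.p.d,\gamma.q.d)$. $NS_\gamma(k)=\{e\in\mathrm{Edges} : e \text{ non-smooth in }\gamma,\ \mathrm{rank}_\gamma(e)=k\}$. *)

(* Defs.v *)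
From mathcomp Require Import all_boot.
Set Implicit Arguments. Unset Strict Implicit. Unset Printing Implicit Defensive.

Definition simple_graph (V : finType) (N : V -> seq V) : Prop :=
  (forall p, uniq (N p)) /\
  (forall p, p \notin N p) /\
  (forall p q, (q \in N p) = (p \in N q)).

Definition connected_graph (V : finType) (N : V -> seq V) : Prop :=
  forall p q, connect (fun x y => y \in N x) p q.

Record config (V : finType) := Config { cd : V -> nat; cpar : V -> V }.

Section BFS.
Variables (V : finType) (N : V -> seq V) (r : V).

Definition valid_config (g : config V) : Prop := forall p, cpar g p \in N p.

(* Dist_p(g) = min { g.q.d + 1 : q in N(p) }  (N p is nonempty for non-root
   nodes of a connected graph with >= 2 nodes). *)
Definition Dist (g : config V) (p : V) : nat :=
  foldr (fun q m => minn (cd g q).+1 m) (cd g (head p (N p))).+1 (N p).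

Definition enabled (g : config V) (p : V) : bool :=
  if p == r then cd g r != 0
  else (cd g p != Dist g p) ||
       ((cd g p == Dist g p) && ((cd g (cpar g p)).+1 != cd g p)).

Definition first_par (g : config V) (p : V) : V :=
  nth p (N p) (find (fun q => (cd g q).+1 == cd g p) (N p)).

Definition exec_d (g : config V) (p : V) : nat :=
  if p == r then 0 else if cd g p != Dist g p then Dist g p else cd g p.

Definition exec_par (g : config V) (p : V) : V :=
  if p == r then cpar g p else if cd g p != Dist g p then cpar g p
  else first_par g p.

Definition step (g g' : config V) : Prop :=
  exists S : {set V}, S != set0 /\
    (forall p, p \in S -> enabled g p) /\
    (forall p, if p \in S then cd g' p = exec_d g p /\ cpar g' p = exec_par g p
               else cd g' p = cd g p /\ cpar g' p = cpar g p).

Definition d_step (g g' : config V) : Prop :=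
  step g g' /\ cd g r = cd g' r /\ exists p, cd g p != cd g' p.

Definition is_edge (e : V * V) : bool := e.2 \in N e.1.

Definition smooth_edge (g : config V) (e : V * V) : bool :=
  (cd g e.1 <= (cd g e.2).+1) && (cd g e.2 <= (cd g e.1).+1).

Definition smooth_step (g g' : config V) : Prop :=
  forall p, cd g' p != cd g p -> forall q, q \in N p -> smooth_edge g (p, q).

Definition rank (g : config V) (e : V * V) : nat := minn (cd g e.1) (cd g e.2).

Definition NS (g : config V) (k : nat) : {set V * V} :=
  [set e | is_edge e && ~~ smooth_edge g e && (rank g e == k)].

Definition changed_nonsmooth (g g' : config V) : {set V * V} :=
  [set e | is_edge e && ~~ smooth_edge g e &&
           ((cd g' e.1 != cd g e.1) || (cd g' e.2 != cd g e.2))].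

End BFS.

(* Main.v *)
Require Import Defs.
From mathcomp Require Import all_boot.
From mathcomp Require Import zify.

Section L.
Variables (V : finType) (N : V -> seq V) (r : V) (g g' : config V).
Hypothesis Hsym : forall p q, (q \in N p) = (p \in N q).
Hypothesis Hne : forall p, p != r -> N p != [::].
Hypothesis Hch : forall p, cd g' p != cd g p -> p != r /\ cd g' p = Dist N g p.

Lemma foldr_props s i :
  let F := foldr (fun q m => minn (cd g q).+1 m) i s in
  (F <= i) /\ (forall q, q \in s -> F <= (cd g q).+1) /\
  (F = i \/ exists2 q, q \in s & F = (cd g q).+1).
Proof.
elim: s => [|a s [IH1 [IH2 IH3]]] /=.
  by split=> //; split=> //; left.
split; first lia.
split.
  move=> q; rewrite inE => /orP [/eqP ->|/IH2]; lia.
case: (leqP (cd g a).+1 (foldr (fun q m => minn (cd g q).+1 m) i s)) => h.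
  right; exists a; first by rewrite inE eqxx.
  lia.
case: IH3 => [E|[q Hq E]].
  left; lia.
right; exists q; first by rewrite inE Hq orbT.
lia.
Qed.

Lemma Dist_le p q : q \in N p -> Dist N g p <= (cd g q).+1.
Proof. by move=> Hq; have [_ [H _]] := foldr_props (N p) (cd g (head p (N p))).+1; apply: H. Qed.

Lemma Dist_ex p : N p != [::] -> exists2 q, q \in N p & Dist N g p = (cd g q).+1.
Proof.
move=> Hn; have [_ [_ [E|E]]] := foldr_props (N p) (cd g (head p (N p))).+1; last exact: E.
exists (head p (N p)); last exact: E.
by case: (N p) Hn => //= a l _; rewrite inE eqxx.
Qed.

Definition chg x := cd g' x != cd g x.

Lemma changed_le x y : chg x -> y \in N x -> cd g' x <= (cd g y).+1.
Proof. by move=> /Hch [_ ->]; apply: Dist_le. Qed.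

Lemma changed_type x : chg x ->
  (exists2 e1, e1 \in changed_nonsmooth N g g' & rank g e1 < cd g' x) \/
  (cd g x < cd g' x /\ forall q, q \in N x -> cd g q <= (cd g x).+1).
Proof.
move=> Hc; have [Hr HD] := Hch x Hc.
have [q0 Hq0 E0] := Dist_ex x (Hne x Hr).
case: (ltnP (cd g' x) (cd g x)) => h.
  left; exists (x, q0).
    rewrite inE /is_edge /smooth_edge /= Hq0 /=.
    have -> : cd g' x != cd g x by [].
    rewrite orTb andbT; apply/negP => /andP [h1 h2]; lia.
  rewrite /rank /=; lia.
have hlt : cd g x < cd g' x by move: Hc; rewrite /chg; lia.
case: (boolP (has (fun q => ~~ smooth_edge g (x, q)) (N x))).
  move/hasP=> [q Hq Hns]; left; exists (x, q).
    by rewrite inE /is_edge /= Hq Hns /=; move: Hc; rewrite /chg => ->.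
  rewrite /rank /=; lia.
move/hasPn=> H; right; split=> // q Hq.
by have := H q Hq; rewrite negbK /smooth_edge /= => /andP [].
Qed.

Lemma claimB p q : q \in N p -> (chg p || chg q) -> ~~ smooth_edge g' (p, q) ->
  exists2 e1, e1 \in changed_nonsmooth N g g' & rank g e1 < rank g' (p, q).
Proof.
move=> Hq Hc Hns.
wlog Hle : p q Hq Hc Hns / cd g' p <= cd g' q.
  move=> W; case: (leqP (cd g' p) (cd g' q)) => h; first exact: W.
  have : exists2 e1, e1 \in changed_nonsmooth N g g' & rank g e1 < rank g' (q, p).
    apply: W.
    - by rewrite -Hsym.
    - by rewrite orbC.
    - by move: Hns; rewrite /smooth_edge /= andbC.
    - lia.
  case=> e1 H1 H2.
  exists e1; first exact: H1.
  move: H2; rewrite /rank /=; lia.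
have Er : rank g' (p, q) = cd g' p by rewrite /rank /=; lia.
rewrite Er.
have contra : cd g' q <= (cd g' p).+1 -> False.
  move=> h; move/negP: Hns; apply; rewrite /smooth_edge /=; apply/andP; split; lia.
case: (boolP (chg p)) => Hp.
  case: (changed_type p Hp) => [//|[h1 h2]].
  exfalso; apply: contra.
  case: (boolP (chg q)) => Hcq.
    have := changed_le q p Hcq (_ : p \in N q); rewrite -Hsym => /(_ Hq); lia.
  move/negbNE/eqP: Hcq => ->; have := h2 q Hq; lia.
move: Hc; rewrite (negbTE Hp) /= => Hc; exfalso; apply: contra.
move/negbNE/eqP: Hp => Ep.
have := changed_le q p Hc (_ : p \in N q); rewrite -Hsym => /(_ Hq); lia.
Qed.

Lemma lemC e : is_edge N e -> (chg e.1 || chg e.2) -> ~~ smooth_edge g e ->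
  e \in changed_nonsmooth N g g'.
Proof. by move=> H1 H2 H3; rewrite inE H1 H3. Qed.

Lemma lemA e k : ~~ (chg e.1 || chg e.2) -> (e \in NS N g k) = (e \in NS N g' k).
Proof.
case: e => a b /=; rewrite negb_or => /andP [/negbNE/eqP Ea /negbNE/eqP Eb].
by rewrite !inE /smooth_edge /rank /= Ea Eb.
Qed.

End L.
Arguments chg {V} g g' x.
Arguments claimB {V N r g g'} Hsym Hne Hch {p q}.
Arguments lemA {V N g g' e k}.
Arguments lemC {V N g g' e}.

Theorem lemma7 (V : finType) (N : V -> seq V) (r : V)
    (HG : simple_graph N) (Hconn : connected_graph N)
    (g g' : config V) (Hval : valid_config N g)
    (Hstep : d_step N r g g') :
  (smooth_step N g g' -> forall k : nat, NS N g k = NS N g' k) /\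
  (~ smooth_step N g g' ->
     forall kstar : nat,
       (exists2 e, e \in changed_nonsmooth N g g' & rank g e = kstar) ->
       (forall e, e \in changed_nonsmooth N g g' -> kstar <= rank g e) ->
       (forall k : nat, k < kstar -> NS N g k = NS N g' k) /\
       NS N g' kstar \proper NS N g kstar).
Proof.
have Hsym := HG.2.2.
have Hne : forall p, p != r -> N p != [::].
  move=> p Hp; have /connectP [s Hs Hl] := Hconn p r.
  case: s Hs Hl => [|y s] /=; first by move=> _ E; rewrite E eqxx in Hp.
  by case/andP=> Hy _ _; case: (N p) Hy.
have Hch : forall p, cd g' p != cd g p -> p != r /\ cd g' p = Dist N g p.
  move=> p Hc; case: Hstep => [[S [_ [_ HS]]] [Er _]].
  have := HS p; case: (p \in S) => [[E _]|[E _]]; last by rewrite E eqxx in Hc.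
  case: (eqVneq p r) => [Epr|Hpr].
    by subst p; rewrite Er eqxx in Hc.
  split; first by [].
  rewrite E /exec_d (negbTE Hpr) in Hc *.
  case: (eqVneq (cd g p) (Dist N g p)) => h.
    by rewrite h eqxx /= -h eqxx in Hc.
  by [].
split.
  move=> Hsm k.
  have Hsg : forall e, is_edge N e -> (chg g g' e.1 || chg g g' e.2) -> smooth_edge g e.
    case=> a b /= He /orP [Ha|Hb]; first by apply: Hsm.
    have := Hsm b Hb a; rewrite -Hsym => /(_ He).
    by rewrite /smooth_edge /= andbC.
  apply/setP=> e.
  case: (boolP (chg g g' e.1 || chg g g' e.2)) => Hc; last by apply: lemA.
  rewrite !inE.
  case: (boolP (is_edge N e)) => He //=.
  rewrite (Hsg e He Hc) /=.
  case: (boolP (smooth_edge g' e)) => //= Hns.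
  case: e He Hc Hns => a b He Hc Hns.
  have [e1 H1 _] := claimB Hsym Hne Hch He Hc Hns.
  move: H1; rewrite inE => /andP [/andP [He1 Hns1] Hc1].
  by rewrite Hsg in Hns1.
move=> _ kstar [e0 He0 Hr0] Hmin.
have notNS' : forall e k, k <= kstar -> (chg g g' e.1 || chg g g' e.2) ->
    e \notin NS N g' k.
  case=> a b k Hk Hc; rewrite inE; apply/negP => /andP [/andP [He Hns] /eqP Hr].
  have [e1 H1 H2] := claimB Hsym Hne Hch He Hc Hns.
  rewrite Hr in H2; have := Hmin e1 H1; lia.
have He0c : chg g g' e0.1 || chg g g' e0.2 by move: He0; rewrite inE => /andP [].
split.
  move=> k Hk; apply/setP=> e.
  case: (boolP (chg g g' e.1 || chg g g' e.2)) => Hc; last by apply: lemA.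
  rewrite (negbTE (notNS' e k (ltnW Hk) Hc)).
  apply/negP; rewrite inE => /andP [/andP [He Hns] /eqP Hr].
  have := Hmin e (lemC He Hc Hns); lia.
apply/properP; split.
  apply/subsetP=> e He.
  case: (boolP (chg g g' e.1 || chg g g' e.2)) => Hc; last by rewrite (@lemA _ _ _ _ _ kstar Hc).
  by rewrite (negbTE (notNS' e kstar (leqnn _) Hc)) in He.
exists e0; last exact: notNS' e0 kstar (leqnn _) He0c.
by move: He0; rewrite !inE Hr0 eqxx => /andP [/andP [-> ->] _].
Qed.
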